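(* Let $U:\mathbb{C}^*\to\mathbb{C}$ be a reasonable expansion with unique restrictions between locally small categories, and assume that all morphisms in $\mathbb{C}$ are monomorphisms. Then for every $A\in\mathrm{Ob}(\mathbb{C})$, $$t_{\mathbb{C}}(A)\le\sum_{\mathcal{A}\in U^{-1}(A)}t_{\mathbb{C}^*}(\mathcal{A}).$$ Consequently, if $U^{-1}(A)$ is finite and $t_{\mathbb{C}^*}(\mathcal{A})<\infty$ for all $\mathcal{A}\in U^{-1}(A)$, then $t_{\mathbb{C}}(A)<\infty$.
   Context: An expansion of $\mathbb{C}$ is a category $\mathbb{C}^*$ with a functor $U:\mathbb{C}^*\to\mathbb{C}$ surjective on objects and injective on hom-sets; we regard $\hom_{\mathbb{C}^*}(\mathcal{A},\mathcal{B})\subseteq\hom_{\mathbb{C}}(U\mathcal{A},U\mathcal{B})$, and $U^{-1}(A)=\{\mathcal{A}:U(\mathcal{A})=A\}$. $U$ is reasonable if for every $e\in\hom(A,B)$ and $\mathcal{A}\in U^{-1}(A)$ there is $\mathcal{B}\in U^{-1}(B)$ with $e\in\hom(\mathcal{A},\mathcal{B})$; it has unique restrictions if for every $\mathcal{B}\in\mathrm{Ob}(\mathbb{C}^* )$ and $e\in\hom(A,U(\mathcal{B}))$ there is exactly one $\mathcal{A}\in U^{-1}(A)$ with $e\in\hom(\mathcal{A},\mathcal{B})$. In a category $\mathbb{D}$: $C\to(B)^A_{k,t}$ means that for every $\chi:\hom(A,C)\to\{0,\dots,k-1\}$ there is $w\in\hom(B,C)$ with $|\chi(w\cdot\hom(A,B))|\le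 t$; $t_{\mathbb{D}}(A)$ is the least positive $n$ such that for all $k\ge2$ and all $B$ there is $C$ with $C\to(B)^A_{k,n}$, and $\infty$ otherwise. A sum with an infinite term or infinitely many terms is $\infty$. *)

(* Defs.v *)
From mathcomp Require Import all_boot.
From mathcomp Require Import boolp.
Set Implicit Arguments. Unset Strict Implicit. Unset Printing Implicit Defensive.

Unset Implicit Arguments.
Record Category := {
  Ob : Type;
  hom : Ob -> Ob -> Type;
  idm : forall A, hom A A;
  comp : forall A B C, hom B C -> hom A B -> hom A C;
  comp_assoc : forall A B C D (f : hom A B) (g : hom B C) (h : hom C D),
      comp A C D h (comp A B C g f) = comp A B D (comp B C D h g) f;
  comp_id_l : forall A B (f : hom A B), comp A B B (idm B) f = f;
  comp_id_r : forall A B (f : hom A B), comp A A B f (idm A) = f }.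

Arguments hom {c} _ _.
Arguments idm {c} A.
Arguments comp {c A B C} g f.

Definition all_monos (D : Category) : Prop :=
  forall (A B C : Ob D) (f : hom B C) (g h : hom A B), comp f g = comp f h -> g = h.

(* Following the paper's convention hom_{C*}(X,Y) ⊆ hom_C(U X, U Y), an
   expansion is given by a type of objects, an object map U, and for each
   pair of objects the subset of C-morphisms that are C*-morphisms; this
   makes U injective on hom-sets by construction. *)
Record Expansion (C : Category) := {
  eOb : Type;
  eU : eOb -> Ob C;
  ehom : forall X Y : eOb, hom (eU X) (eU Y) -> Prop;
  ehom_id : forall X, ehom X X (idm (eU X));
  ehom_comp : forall X Y Z (f : hom (eU X) (eU Y)) (g : hom (eU Y) (eU Z)),
      ehom X Y f -> ehom Y Z g -> ehom X Z (@comp C _ _ _ g f);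
  eU_surj : forall A : Ob C, exists X : eOb, eU X = A }.

Set Implicit Arguments.
Arguments eOb {C} e.
Arguments eU {C} e _.
Arguments ehom_id {C} e X.
Arguments ehom {C} e X Y _.
Arguments ehom_comp {C} e {X Y Z f g}.

Section ExpCat.
Variables (C : Category) (E : Expansion C).

Definition ehomT (X Y : eOb E) := {f : hom (eU E X) (eU E Y) | ehom E X Y f}.

Definition ecomp (X Y Z : eOb E) (g : ehomT Y Z) (f : ehomT X Y) : ehomT X Z :=
  exist _ (comp (proj1_sig g) (proj1_sig f))
        (ehom_comp E (proj2_sig f) (proj2_sig g)).

Definition eidm (X : eOb E) : ehomT X X := exist _ (idm (eU E X)) (ehom_id E X).

Lemma ehomT_eq X Y (f g : ehomT X Y) : proj1_sig f = proj1_sig g -> f = g.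
Proof.
case: f => f pf; case: g => g pg /= efg; subst g.
by rewrite (Prop_irrelevance pf pg).
Qed.

Lemma ecomp_assoc X Y Z W (f : ehomT X Y) (g : ehomT Y Z) (h : ehomT Z W) :
  ecomp h (ecomp g f) = ecomp (ecomp h g) f.
Proof. by apply: ehomT_eq; rewrite /= comp_assoc. Qed.

Lemma ecomp_id_l X Y (f : ehomT X Y) : ecomp (eidm Y) f = f.
Proof. by apply: ehomT_eq; rewrite /= comp_id_l. Qed.

Lemma ecomp_id_r X Y (f : ehomT X Y) : ecomp f (eidm X) = f.
Proof. by apply: ehomT_eq; rewrite /= comp_id_r. Qed.

Definition ExpCategory : Category :=
  {| Ob := eOb E; hom := ehomT; idm := eidm; comp := ecomp;
     comp_assoc := ecomp_assoc; comp_id_l := ecomp_id_l;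
     comp_id_r := ecomp_id_r |}.
End ExpCat.

Definition reasonable (C : Category) (E : Expansion C) : Prop :=
  forall (X : eOb E) (B : Ob C) (e : hom (eU E X) B),
    exists Y : eOb E, exists H : B = eU E Y,
      ehom E X Y (eq_rect B (fun b => hom (eU E X) b) e (eU E Y) H).

Definition restricts (C : Category) (E : Expansion C) (A : Ob C) (Y : eOb E)
  (e : hom A (eU E Y)) (X : eOb E) : Prop :=
  exists H : A = eU E X, ehom E X Y (eq_rect A (fun a => hom a (eU E Y)) e (eU E X) H).

Definition unique_restrictions (C : Category) (E : Expansion C) : Prop :=
  forall (Y : eOb E) (A : Ob C) (e : hom A (eU E Y)),
    exists X : eOb E, restricts e X /\ forall X', restricts e X' -> X' = X.

Definition fibre (C : Category) (E : Expansion C) (A : Ob C) : Type :=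
  {X : eOb E | eU E X = A}.

Definition arrow (D : Category) (Cc B A : Ob D) (k t : nat) : Prop :=
  forall chi : hom A Cc -> 'I_k, exists w : hom B Cc,
    #|[set c : 'I_k | `[< exists f : hom A B, chi (comp w f) = c >]]| <= t.

Definition has_degree (D : Category) (A : Ob D) (n : nat) : Prop :=
  0 < n /\ forall k : nat, 2 <= k -> forall B : Ob D, exists Cc : Ob D, arrow Cc B A k n.

Inductive enat := Fin of nat | Inf.

Definition enat_le (x y : enat) : Prop :=
  match x, y with
  | _, Inf => True
  | Inf, Fin _ => False
  | Fin m, Fin n => m <= n
  end.

Definition eadd (x y : enat) : enat :=
  match x, y with Fin m, Fin n => Fin (m + n) | _, _ => Inf end.

Definition ramsey_degree (D : Category) (A : Ob D) : enat :=
  match pselect (exists n, has_degree A n) with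
  | left H =>
      Fin (@ex_minn (fun n => `[< has_degree A n >])
             (let (n, Hn) := H in ex_intro _ n (asboolT Hn)))
  | right _ => Inf
  end.

Definition finite_type (I : Type) : Prop :=
  exists n : nat, exists e : 'I_n -> I, bijective e.

(* sum over a type of extended naturals: infinite if the index type is
   infinite or if some term is infinite *)
Definition enat_sum (I : Type) (F : I -> enat) : enat :=
  match pselect (finite_type I) with
  | left H =>
      let (n, Hn) := cid H in
      let (e, _) := cid Hn in
      \big[eadd/Fin 0]_(i < n) F (e i)
  | right _ => Inf
  end.

(* Main.v *)
Require Import Defs.
From mathcomp Require Import all_boot.
From mathcomp Require Import boolp.
From Stdlib Require List.

Lemma eq_rect_comp (C : Category) (a b : Ob C) (H : a = b) (c d : Ob C)
  (g : hom c d) (f : hom a c) :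
  eq_rect a (fun a => hom a d) (Defs.comp g f) b H
  = Defs.comp g (eq_rect a (fun a => hom a c) f b H).
Proof. by case: b / H. Qed.

Lemma eq_rect_K (C : Category) (a b c : Ob C) (H : a = b) (f : hom a c) :
  eq_rect b (fun a => hom a c) (eq_rect a (fun a => hom a c) f b H) a (esym H) = f.
Proof. by case: b / H. Qed.

Lemma In_of_in (T : eqType) (x : T) s : x \in s -> List.In x s.
Proof.
elim: s => //= y s IH; rewrite in_cons => /orP [/eqP ->|/IH]; auto.
Qed.

Lemma big_eadd_fin (I : Type) (s : seq I) (G : I -> enat) d :
  (forall i, G i = Fin (d i)) ->
  \big[eadd/Fin 0]_(i <- s) G i = Fin (\sum_(i <- s) d i).
Proof.
move=> H; elim: s => [|i s IH]; rewrite ?big_nil ?big_cons // IH H //.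
Qed.

Lemma big_eadd_inv (I : eqType) (s : seq I) (G : I -> enat) m :
  \big[eadd/Fin 0]_(i <- s) G i = Fin m -> forall i, i \in s -> exists d, G i = Fin d.
Proof.
elim: s m => [|j s IH] m; rewrite ?big_nil ?big_cons // => H i.
rewrite in_cons => /orP [/eqP ->|Hi].
  by move: H; case: (G j) => [a|] //= _; exists a.
move: H; case: (G j) => [a|] //=.
case Hb: (\big[eadd/Fin 0]_(i0 <- s) G i0) => [b|] //= _.
exact: IH Hb i Hi.
Qed.

Lemma rd_le (D : Category) (A : Ob D) m :
  has_degree A m -> enat_le (ramsey_degree A) (Fin m).
Proof.
move=> H; rewrite /ramsey_degree; case: pselect => [H'|H']; last first.
  by exfalso; apply: H'; exists m.
case: ex_minnP => m' _ /(_ m); apply; exact/asboolP.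
Qed.

Lemma rd_fin (D : Category) (A : Ob D) d :
  ramsey_degree A = Fin d -> has_degree A d.
Proof.
rewrite /ramsey_degree; case: pselect => // H.
case: ex_minnP => m Hm _ [<-]; exact/asboolP.
Qed.

Arguments rd_fin {D A d}.
Arguments big_eadd_fin {I s G d}.
Arguments big_eadd_inv {I s G m}.
Arguments rd_le {D A m}.

Section Main.
Variables (C : Category) (E : Expansion C) (A : Ob C).

Definition cb (x : fibre E A) {Y : eOb E} (f : hom (eU E (proj1_sig x)) (eU E Y)) :
  hom A (eU E Y) :=
  eq_rect _ (fun a => hom a (eU E Y)) f A (proj2_sig x).

Lemma cb_comp x (Y Z : eOb E) (g : hom (eU E Y) (eU E Z)) (f : hom (eU E (proj1_sig x)) (eU E Y)) : cb x (Defs.comp g f) = Defs.comp g (cb x f).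
Proof. exact: eq_rect_comp. Qed.

Lemma stage (I : Type) (e : I -> fibre E A) (d : I -> nat)
  (Hd : forall i, has_degree (D := ExpCategory E) (proj1_sig (e i)) (d i))
  k (Hk : 2 <= k) (s : seq I) :
  forall B : eOb E, exists Cs : eOb E, forall chi : hom A (eU E Cs) -> 'I_k,
    exists w : ehomT (E:=E) B Cs,
    #|[set c : 'I_k | `[< exists i, List.In i s /\
        exists f : ehomT (E:=E) (proj1_sig (e i)) B,
          chi (Defs.comp (proj1_sig w) (cb (e i) (proj1_sig f))) = c >]]|
    <= \sum_(i <- s) d i.
Proof.
elim: s => [|i s IH] B.
  exists B => chi; exists (eidm B); rewrite big_nil leqn0 cards_eq0.
  apply/eqP/setP => c; rewrite !inE; apply/negbTE/asboolPn => -[j []] //.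
have [C' HC'] := IH B.
have [Cs HCs] := (Hd i).2 k Hk C'.
exists Cs => chi.
pose chix := fun g : ehomT (E:=E) (proj1_sig (e i)) Cs => chi (cb (e i) (proj1_sig g)).
have [w1 Hw1] := HCs chix.
have [w' Hw'] := HC' (fun f => chi (Defs.comp (proj1_sig w1) f)).
exists (ecomp w1 w'); rewrite big_cons.
apply: leq_trans (leq_add Hw1 Hw'); apply: leq_trans (leq_card_setU _ _).
apply: subset_leq_card; apply/subsetP => c; rewrite !inE => /asboolP [j [[<-|Hj] [f Hf]]].
  apply/orP; left; apply/asboolP; exists (ecomp w' f).
  by rewrite /chix /= -Hf !cb_comp comp_assoc.
apply/orP; right; apply/asboolP; exists j; split => //; exists f.
by rewrite -Hf /= comp_assoc.
Qed.

Lemma core (ur : unique_restrictions E) n (e : 'I_n -> fibre E A) (be : bijective e)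
  (d : 'I_n -> nat)
  (Hd : forall i, has_degree (D := ExpCategory E) (proj1_sig (e i)) (d i)) :
  has_degree A (\sum_(i < n) d i).
Proof.
have [X0 HX0] := eU_surj _ E A.
case: be => einv eK Ke.
split.
  pose i0 := einv (exist _ X0 HX0).
  rewrite (bigD1 i0) //=; exact: leq_trans (Hd i0).1 (leq_addr _ _).
move=> k Hk B; have [Bs <-] := eU_surj _ E B.
have [Cs HCs] := @stage 'I_n e d Hd k Hk (index_enum 'I_n) Bs.
exists (eU E Cs) => chi; have [w Hw] := HCs chi.
exists (proj1_sig w); apply: leq_trans Hw; apply: subset_leq_card.
apply/subsetP => c; rewrite !inE => /asboolP [f Hf]; apply/asboolP.
have [X [[H HX] _]] := ur Bs A f.
pose x : fibre E A := exist _ X (esym H).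
exists (einv x); split; first exact/In_of_in/mem_index_enum.
rewrite Ke; exists (exist _ _ HX).
by rewrite /cb /= eq_rect_K.
Qed.

End Main.

Theorem theorem6p1 (C : Category) (E : Expansion C) :
  reasonable E -> unique_restrictions E -> all_monos C ->
  forall A : Ob C,
    enat_le (ramsey_degree A)
            (enat_sum (fun X : fibre E A => ramsey_degree (D := ExpCategory E) (proj1_sig X)))
    /\ (finite_type (fibre E A) ->
        (forall X : fibre E A, ramsey_degree (D := ExpCategory E) (proj1_sig X) <> Inf) ->
        ramsey_degree A <> Inf).
Proof.
move=> _ ur _ A.
have part : finite_type (fibre E A) ->
    (forall X : fibre E A, ramsey_degree (D := ExpCategory E) (proj1_sig X) <> Inf) ->
    exists m, has_degree A m.
  move=> [n [e be]] Hall.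
  have Hex : forall i : 'I_n, exists m,
      ramsey_degree (D := ExpCategory E) (proj1_sig (e i)) = Fin m.
    move=> i; move: (Hall (e i)).
    by case: ramsey_degree => [m|] // _; exists m.
  have [d Hd] := choice Hex.
  exists (\sum_(i < n) d i); exact: (@core C E A ur n e be d (fun i => rd_fin (Hd i))).
split; last first.
  move=> Hf Hall; have [m Hm] := part Hf Hall; move: (rd_le Hm).
  by case: ramsey_degree.
rewrite /enat_sum; case: pselect => [Hf|_]; last by case: ramsey_degree.
case: (cid Hf) => n Hn; case: (cid Hn) => e be.
case: (pselect (forall i : 'I_n,
   exists d, ramsey_degree (D := ExpCategory E) (proj1_sig (e i)) = Fin d)) => [Hall|Hno].
  have [d Hd] := choice Hall.
  rewrite (big_eadd_fin Hd); apply: rd_le; exact: (@core C E A ur n e be d (fun i => rd_fin (Hd i))).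
case Hb: (\big[eadd/Fin 0]_(i < n) _) => [m|]; last by case: ramsey_degree.
exfalso; apply: Hno => i; apply: (big_eadd_inv Hb); exact: mem_index_enum.
Qed.
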